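(* Let $H \in \mathbb{R}^{r \times n}_+$ be an entrywise nonnegative matrix satisfying the NC-SSC, i.e., $e - e_i \in \operatorname{cone}(H)$ for all $i \in \{1,\dots,r\}$. Then every $x \in \mathbb{R}^r$ with $e^\top x = 1$ and $H^\top x \ge 0$ (entrywise) satisfies $2 - r \le x_i \le 1$ for all $i \in \{1,\dots,r\}$.
   Context: $e \in \mathbb{R}^r$ denotes the all-ones vector and $e_i$ the $i$-th standard unit vector of $\mathbb{R}^r$. For $H \in \mathbb{R}^{r\times n}$, $\operatorname{cone}(H) = \{ Hy : y \in \mathbb{R}^n, y \ge 0\}$. The NC-SSC for $H$ means $\operatorname{cone}(ee^\top - I) \subseteq \operatorname{cone}(H)$, equivalently $e - e_i \in \operatorname{cone}(H)$ for all $i$. *)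

(* Defs.v *)
From mathcomp Require Import all_boot all_order all_algebra.
Set Implicit Arguments. Unset Strict Implicit. Unset Printing Implicit Defensive.
Import Order.TTheory GRing.Theory Num.Theory.
Local Open Scope ring_scope.

Definition ones (R : nzRingType) (r : nat) : 'cV[R]_r := const_mx 1.
Definition unitv (R : nzRingType) (r : nat) (i : 'I_r) : 'cV[R]_r := delta_mx i 0.

Definition nonneg_mx (R : numDomainType) (m n : nat) (A : 'M[R]_(m, n)) : Prop :=
  forall i j, 0 <= A i j.

Definition in_cone (R : numDomainType) (r n : nat) (H : 'M[R]_(r, n)) (v : 'cV[R]_r) : Prop :=
  exists y : 'cV[R]_n, nonneg_mx y /\ H *m y = v.

Definition NC_SSC (R : numDomainType) (r n : nat) (H : 'M[R]_(r, n)) : Prop :=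
  forall i : 'I_r, in_cone H (ones R r - unitv R i).

(* Main.v *)
Require Import Defs.
From mathcomp Require Import all_boot all_order all_algebra.
From mathcomp Require Import lra.
Import Order.TTheory GRing.Theory Num.Theory.
Local Open Scope ring_scope.

Theorem lemma2 (R : realFieldType) (r n : nat) (H : 'M[R]_(r, n)) :
  nonneg_mx H -> NC_SSC H ->
  forall x : 'cV[R]_r,
    (ones R r)^T *m x = 1 -> nonneg_mx (H^T *m x) ->
    forall i : 'I_r, 2 - r%:R <= x i 0 /\ x i 0 <= 1.
Proof.
move=> H0 Hc x Hs Hx.
have Hsum : \sum_k x k 0 = 1.
  have := congr1 (fun M : 'M[R]_1 => M 0 0) Hs; rewrite /= !mxE eqxx mulr1n => <-.
  by apply: eq_bigr => k _; rewrite !mxE mul1r.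
have up : forall j, x j 0 <= 1.
  move=> j; have [y [y0 Hy]] := Hc j.
  have E : ((ones R r - unitv R j)^T *m x) 0 0 = 1 - x j 0.
    rewrite linearB mulmxBl Hs !mxE eqxx mulr1n; congr (_ - _).
    rewrite (bigD1 j) //= big1 ?addr0; first by rewrite !mxE eqxx mul1r.
    by move=> k /negbTE kj; rewrite !mxE kj mul0r.
  have : 0 <= 1 - x j 0.
    rewrite -E -Hy trmx_mul -mulmxA mxE; apply: sumr_ge0 => k _.
    by rewrite mxE; apply: mulr_ge0; [apply: y0|apply: Hx].
  by rewrite subr_ge0.
move=> i; split; last exact: up.
move: Hsum; rewrite (bigD1 i) //= => Hsum.
have : \sum_(k | k != i) x k 0 <= \sum_(k | k != i) (1 : R).
  by apply: ler_sum => k _; apply: up.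
rewrite sumr_const cardC1 card_ord.
have r0 : (0 < r)%N by case: (i) => k kr; exact: leq_ltn_trans (leq0n k) kr.
move=> Hle; have E1 : r%:R = (r.-1)%:R + 1 :> R by rewrite natr1 (prednK r0).
rewrite E1; move: Hle Hsum; move: (\sum_(k | k != i) x k 0) ((r.-1)%:R) (x i 0) => S m a Hle Hsum.
clear -Hle Hsum; lra.
Qed.
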